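(* Let $\{(X_n, w_n)\}_{n \in \mathbb{N}}$ be a sequence of finite $k$-regular marked graphs that strongly converges to the $k$-regular marked graph $(X, w)$, with covering maps $p_n: X_{n+1} \to X_n$ and $\rho_n: X \to X_n$ as in the definition of strong convergence. Let $F$ be a finite $d$-regular graph, let $\phi_1$ be an $\mathrm{Aut}(F)$-voltage assignment on $X_1$, define inductively $\phi_{n+1}(uv) = \phi_n(p_n(u)p_n(v))$ on $X_{n+1}$, and $\phi(uv) = \phi_1(\rho_1(u)\rho_1(v))$ on $X$. Then for each $i \in V(F)$ the covering sequence $\{(X_n \times^{\phi_n} F, (w_n, i))\}_{n \in \mathbb{N}}$ strongly converges to $(X \times^{\phi} F, (w, i))$.
   Context: A covering map $p: \tilde G \to G$ is a graph map that restricts to a bijection from the neighbour set $N(x)$ onto $N(p(x))$ for each vertex $x$. $B_X(w,s)$ denotes the combinatorial ball of radius $s$ about $w$. A sequence $\{(X_n,w_n)\}_{n\ge1}$ of finite marked graphs strongly converges to $(X,w)$ if: (1) every $X_n$ is $r$-regular (for some fixed $r$) and there are covering maps $p_n: X_{n+1} \to X_n$; (2) $X$ is $r$-regular; (3) there are covering maps $\rho_n: X \to X_n$ with $\rho_1 = p_1 \circ \cdots \circ p_{n-1} \circ \rho_n$ for all $n$, and for each $n$ the restriction of $\rho_n$ to $B_X(w,s_n)$ is an isometry onto $B_{X_n}(w_n,s_n)$, where $s_n \to \infty$. For a graph $G$, $E(\overrightarrow{G})$ is the set of ordered edges; an $\mathrm{Aut}(F)$-voltage assignment on $G$ is a map $\phi: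 E(\overrightarrow{G}) \to \mathrm{Aut}(F)$ with $\phi(uv) = \phi(vu)^{-1}$. The graph bundle $G \times^{\phi} F$ has vertex set $V(G)\times V(F)$, with $(u,i) \sim (v,j)$ iff either $u \sim v$ and $j = i^{\phi(uv)}$ (the image of $i$ under $\phi(uv)$), or $u = v$ and $i \sim j$ in $F$. *)

(* Defs.v *)
From Stdlib Require Import List Arith.
Import ListNotations.
Set Implicit Arguments.

(* A graph: a vertex type and an adjacency relation (Prop-valued, so that
   infinite graphs such as the limit graph X are allowed). *)
Record graph := Graph { V : Type ; adj : V -> V -> Prop }.
Arguments adj {g} _ _.

Definition simple_graph (G : graph) : Prop :=
  (forall x y : V G, adj x y -> adj y x) /\ (forall x : V G, ~ adj x x).

Definition finite_graph (G : graph) : Prop :=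
  exists l : list (V G), forall v, In v l.

Definition regular (r : nat) (G : graph) : Prop :=
  forall x : V G, exists l : list (V G),
    NoDup l /\ length l = r /\ forall y, In y l <-> adj x y.

Definition covering (G H : graph) (p : V G -> V H) : Prop :=
  (forall x y, adj x y -> adj (p x) (p y)) /\
  (forall x y z, adj x y -> adj x z -> p y = p z -> y = z) /\
  (forall x y', adj (p x) y' -> exists y, adj x y /\ p y = y').

Inductive walk (G : graph) : nat -> V G -> V G -> Prop :=
| walk0 : forall x, walk G 0 x x
| walkS : forall n x y z, adj x y -> walk G n y z -> walk G (S n) x z.

Definition dist_le (G : graph) (x y : V G) (n : nat) : Prop :=
  exists m, m <= n /\ walk G m x y.

Definition in_ball (G : graph) (w : V G) (s : nat) (x : V G) : Prop :=
  dist_le G w x s.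

Definition ball_isometry (G H : graph) (f : V G -> V H) (w : V G) (w' : V H)
  (s : nat) : Prop :=
  f w = w' /\
  (forall x, in_ball G w s x -> in_ball H w' s (f x)) /\
  (forall x', in_ball H w' s x' -> exists x, in_ball G w s x /\ f x = x') /\
  (forall x y, in_ball G w s x -> in_ball G w s y ->
     forall m, dist_le G x y m <-> dist_le H (f x) (f y) m).

Fixpoint down (X : nat -> graph) (p : forall n, V (X (S n)) -> V (X n))
  (n : nat) : V (X n) -> V (X 0) :=
  match n return V (X n) -> V (X 0) with
  | 0 => fun x => x
  | S m => fun x => down X p m (p m x)
  end.

Definition tends_to_infty (s : nat -> nat) : Prop :=
  forall M, exists N, forall n, N <= n -> M <= s n.

(* Strong convergence of (X_n, w_n) to (Y, y), witnessed by the given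
   covering maps p and rho (indices shifted: paper's n >= 1 is our n >= 0). *)
Definition strongly_converges_via (X : nat -> graph) (w : forall n, V (X n))
  (p : forall n, V (X (S n)) -> V (X n)) (Y : graph) (y : V Y)
  (rho : forall n, V Y -> V (X n)) : Prop :=
  exists r : nat,
    (forall n, finite_graph (X n) /\ regular r (X n)) /\
    (forall n, covering (X (S n)) (X n) (p n)) /\
    regular r Y /\
    (forall n, covering Y (X n) (rho n)) /\
    (forall n x, rho 0 x = down X p n (rho n x)) /\
    exists s : nat -> nat, tends_to_infty s /\
      forall n, ball_isometry Y (X n) (rho n) y (w n) (s n).

Definition strongly_converges (X : nat -> graph) (w : forall n, V (X n))
  (Y : graph) (y : V Y) : Prop :=
  exists (p : forall n, V (X (S n)) -> V (X n))
         (rho : forall n, V Y -> V (X n)),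
    strongly_converges_via X w p Y y rho.

Definition automorphism (F : graph) (f : V F -> V F) : Prop :=
  (exists g : V F -> V F, (forall i, g (f i) = i) /\ (forall i, f (g i) = i)) /\
  (forall i j, adj i j <-> adj (f i) (f j)).

(* Aut(F)-voltage assignment on G: phi u v is the voltage of the ordered edge
   uv (values on non-edges are irrelevant); phi(uv) = phi(vu)^-1. *)
Definition voltage (G F : graph) (phi : V G -> V G -> V F -> V F) : Prop :=
  forall u v, adj u v ->
    automorphism F (phi u v) /\
    (forall i, phi v u (phi u v i) = i) /\ (forall i, phi u v (phi v u i) = i).

Definition bundle (G F : graph) (phi : V G -> V G -> V F -> V F) : graph :=
  @Graph (V G * V F)%type
    (fun a b => (adj (fst a) (fst b) /\ snd b = phi (fst a) (fst b) (snd a))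
             \/ (fst a = fst b /\ adj (snd a) (snd b))).

Fixpoint lift_voltage (X : nat -> graph) (p : forall n, V (X (S n)) -> V (X n))
  (F : graph) (phi1 : V (X 0) -> V (X 0) -> V F -> V F) (n : nat)
  : V (X n) -> V (X n) -> V F -> V F :=
  match n return V (X n) -> V (X n) -> V F -> V F with
  | 0 => phi1
  | S m => fun u v => lift_voltage X p F phi1 m (p m u) (p m v)
  end.

(* Main.v *)
Require Import Defs.
From Stdlib Require Import List Arith.
From Stdlib Require Import Lia FinFun.
Import ListNotations.

Lemma hom_walk (G H : graph) (f : V G -> V H) :
  (forall x y, adj x y -> adj (f x) (f y)) ->
  forall n x z, walk G n x z -> walk H n (f x) (f z).
Proof.
  intros Hh n x z W; induction W.
  - constructor.
  - econstructor; eauto.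
Qed.

Lemma lift_walk (G H : graph) (f : V G -> V H) :
  covering G H f -> forall n u z', walk H n u z' ->
  forall x, f x = u -> exists z, walk G n x z /\ f z = z'.
Proof.
  intros [_ [_ Hl]] n u z' W; induction W; intros x0 Hx.
  - exists x0; split; [constructor|auto].
  - subst x. destruct (Hl x0 y H0) as [y0 [Hy Hfy]].
    destruct (IHW y0 Hfy) as [z0 [Wz Hz]].
    exists z0; split; [econstructor; eauto|auto].
Qed.

Lemma walk_app (G : graph) n m x y z :
  walk G n x y -> walk G m y z -> walk G (n + m) x z.
Proof.
  intros W; revert m z; induction W; intros m w W2; simpl; auto.
  econstructor; eauto.
Qed.

Lemma walk_snoc (G : graph) n x y z :
  walk G n x y -> adj y z -> walk G (S n) x z.
Proof.
  intros W; induction W; intros A.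
  - econstructor; [exact A|constructor].
  - econstructor; eauto.
Qed.

Lemma walk_rev (G : graph) :
  (forall x y : V G, adj x y -> adj y x) ->
  forall n x y, walk G n x y -> walk G n y x.
Proof.
  intros Hs n x y W; induction W.
  - constructor.
  - eapply walk_snoc; eauto.
Qed.

Lemma walk0_eq (G : graph) n x y : walk G n x y -> n = 0 -> x = y.
Proof. intros W; destruct W; auto; discriminate. Qed.

Lemma bundle_proj (G F : graph) phi n a b :
  walk (bundle G F phi) n a b -> exists m, m <= n /\ walk G m (fst a) (fst b).
Proof.
  intros W; induction W.
  - exists 0; split; [auto|constructor].
  - destruct IHW as [m [Hm Wm]].
    destruct H as [[H1 H2]|[H1 H2]].
    + exists (S m); split; [lia|econstructor; eauto].
    + exists m; split; [lia|]. simpl in H1. rewrite H1; exact Wm.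
Qed.

Lemma covering_bundle (G H F : graph) (f : V G -> V H) phiG phiH :
  covering G H f -> (forall x : V H, ~ adj x x) ->
  (forall u v j, phiG u v j = phiH (f u) (f v) j) ->
  covering (bundle G F phiG) (bundle H F phiH) (fun a => (f (fst a), snd a)).
Proof.
  intros [Hhom [Hinj Hlift]] Hirr Hphi.
  split; [|split].
  - intros [x i] [y j] Hxy; cbn in *. destruct Hxy as [[H1 H2]|[H1 H2]].
    + left. split; [auto| rewrite H2; apply Hphi].
    + right. split; [congruence|auto].
  - intros [x i] [y j] [z l] Hxy Hxz Heq; cbn in *. injection Heq as E1 E2.
    destruct Hxy as [[A1 A2]|[A1 A2]]; destruct Hxz as [[B1 B2]|[B1 B2]].
    + f_equal; [eapply Hinj; eauto| congruence].
    + subst z. exfalso. pose proof (Hhom x y A1) as Q. rewrite E1 in Q. exact (Hirr _ Q).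
    + subst y. exfalso. pose proof (Hhom x z B1) as Q. rewrite <- E1 in Q. exact (Hirr _ Q).
    + subst; congruence.
  - intros [x i] [y' j'] Hadj; cbn in *. destruct Hadj as [[A1 A2]|[A1 A2]].
    + destruct (Hlift x y' A1) as [y [Hy Hfy]]. exists (y, j'). cbn.
      split; [left; split; [auto| rewrite Hphi, Hfy; exact A2] | congruence].
    + exists (x, j'). cbn. split; [right; auto | congruence].
Qed.

Lemma regular_bundle (G F : graph) phi k d :
  regular k G -> regular d F -> (forall x : V G, ~ adj x x) ->
  regular (k + d) (bundle G F phi).
Proof.
  intros HG HF Hirr [u i].
  destruct (HG u) as [lG [N1 [L1 I1]]]. destruct (HF i) as [lF [N2 [L2 I2]]].
  exists (map (fun v => (v, phi u v i)) lG ++ map (fun j => (u, j)) lF).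
  split; [|split].
  - apply NoDup_app.
    + apply Injective_map_NoDup; auto. intros a b E. injection E; auto.
    + apply Injective_map_NoDup; auto. intros a b E. injection E; auto.
    + intros a Ha Hb. apply in_map_iff in Ha. apply in_map_iff in Hb.
      destruct Ha as [v [<- Hv]]. destruct Hb as [j [E Hj]].
      injection E as E1 E2. apply I1 in Hv. subst v. exact (Hirr _ Hv).
  - rewrite length_app, !length_map. lia.
  - intros [v j]. rewrite in_app_iff, !in_map_iff. cbn. split.
    + intros [[v0 [E Hv]]|[j0 [E Hj]]]; injection E as E1 E2; subst.
      * left. split; [apply I1; auto|auto].
      * right. split; [auto|apply I2; auto].
    + intros [[A1 A2]|[A1 A2]]; subst.
      * left. exists v. split; [auto|apply I1; auto].
      * right. exists j. split; [auto|apply I2; auto].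
Qed.

Lemma finite_bundle (G F : graph) phi :
  finite_graph G -> finite_graph F -> finite_graph (bundle G F phi).
Proof.
  intros [lG HG] [lF HF]. exists (list_prod lG lF). intros [u i].
  apply in_prod_iff; auto.
Qed.

Lemma iso_bundle (G H F : graph) phiG phiH (f : V G -> V H) (g : V G) (h : V H)
  (s s' : nat) (i : V F) :
  covering (bundle G F phiG) (bundle H F phiH) (fun a => (f (fst a), snd a)) ->
  (forall a b : V (bundle G F phiG), adj a b -> adj b a) ->
  f g = h ->
  (forall x y, in_ball G g s x -> in_ball G g s y -> f x = f y -> x = y) ->
  3 * s' <= s ->
  ball_isometry (bundle G F phiG) (bundle H F phiH) (fun a => (f (fst a), snd a))
    ((g, i) : V (bundle G F phiG)) ((h, i) : V (bundle H F phiH)) s'.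
Proof.
  intros Hcov Hsym Hfg Hinj Hs.
  assert (Hhom := proj1 Hcov).
  split; [|split; [|split]].
  - cbn. rewrite Hfg. reflexivity.
  - intros x [m [Hm W]]. exists m. split; auto.
    pose proof (hom_walk _ _ _ Hhom _ _ _ W) as W'. cbn in W'. rewrite Hfg in W'. exact W'.
  - intros x' [m [Hm W]].
    destruct (lift_walk _ _ _ Hcov _ _ _ W (g, i)) as [x [Wx Hx]].
    + cbn. rewrite Hfg. reflexivity.
    + exists x. split; auto. exists m; auto.
  - intros x y [m1 [Hm1 W1]] [m2 [Hm2 W2]] m. split.
    + intros [m0 [Hm0 W]]. exists m0. split; auto. exact (hom_walk _ _ _ Hhom _ _ _ W).
    + intros [m0 [Hm0 W]].
      destruct (le_lt_dec (2 * s') m0) as [Hbig|Hsmall].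
      * exists (m1 + m2). split; [lia|].
        eapply walk_app; [apply walk_rev; [exact Hsym|exact W1]|exact W2].
      * destruct (lift_walk _ _ _ Hcov _ _ _ W x eq_refl) as [z [Wz Hz]].
        assert (Wgz := walk_app _ _ _ _ _ _ W1 Wz).
        destruct (bundle_proj _ _ _ _ _ _ Wgz) as [mz [Hmz Wgz']].
        destruct (bundle_proj _ _ _ _ _ _ W2) as [my [Hmy Wgy']].
        destruct z as [z1 z2]; destruct y as [y1 y2]. cbn in Hz, Wgz', Wgy'.
        injection Hz as Ez1 Ez2.
        assert (z1 = y1).
        { apply Hinj; auto; [exists mz | exists my]; split; auto; lia. }
        subst. exists m0. split; auto.
Qed.

Lemma lift_voltage_down (X : nat -> graph) (p : forall n, V (X (S n)) -> V (X n))
  (F : graph) phi1 : forall n a b,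
  lift_voltage X p F phi1 n a b = phi1 (down X p n a) (down X p n b).
Proof.
  induction n; intros a b; simpl; auto.
Qed.

Theorem theorem2p15 (k d : nat) (X : nat -> graph) (w : forall n, V (X n))
  (p : forall n, V (X (S n)) -> V (X n)) (Y : graph) (y : V Y)
  (rho : forall n, V Y -> V (X n)) (F : graph)
  (phi1 : V (X 0) -> V (X 0) -> V F -> V F) :
  (forall n, simple_graph (X n)) -> simple_graph Y ->
  (forall n, regular k (X n)) -> regular k Y ->
  strongly_converges_via X w p Y y rho ->
  simple_graph F -> finite_graph F -> regular d F ->
  voltage (X 0) F phi1 ->
  forall i : V F,
    strongly_converges
      (fun n => bundle (X n) F (lift_voltage X p F phi1 n))
      (fun n => (w n, i))
      (bundle Y F (fun u v => phi1 (rho 0 u) (rho 0 v)))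
      (y, i).
Proof.
  intros HsX HsY HrX HrY Hconv HsF HfinF HrF Hvolt i.
  destruct Hconv as [r [Hfin [Hcovp [HrY' [Hcovr [Hdown [s [Hs Hiso]]]]]]]].
  set (X' := fun n => bundle (X n) F (lift_voltage X p F phi1 n)).
  set (Y' := bundle Y F (fun u v => phi1 (rho 0 u) (rho 0 v))).
  exists (fun n (a : V (X' (S n))) => ((p n (fst a), snd a) : V (X' n))).
  exists (fun n (a : V Y') => ((rho n (fst a), snd a) : V (X' n))).
  assert (HphiY : forall n u v j, phi1 (rho 0 u) (rho 0 v) j =
                   lift_voltage X p F phi1 n (rho n u) (rho n v) j).
  { intros n u v j. rewrite lift_voltage_down, !(Hdown n). reflexivity. }
  assert (Hdb : forall n a, down X' (fun n (a : V (X' (S n))) => ((p n (fst a), snd a) : V (X' n))) n a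
                  = (down X p n (fst a), snd a)).
  { induction n; intros a; simpl; [destruct a; reflexivity|]. rewrite IHn. reflexivity. }
  exists (k + d). split; [|split; [|split; [|split; [|split]]]].
  - intros n. split.
    + apply finite_bundle; [apply Hfin|auto].
    + apply regular_bundle; auto. apply HsX.
  - intros n. apply (covering_bundle (X (S n)) (X n) F (p n)); auto. apply HsX.
  - apply regular_bundle; auto. apply HsY.
  - intros n. apply (covering_bundle Y (X n) F (rho n)); auto. apply HsX.
  - intros n x. rewrite Hdb. cbn. rewrite (Hdown n). reflexivity.
  - exists (fun n => s n / 3). split.
    + intros M. destruct (Hs (3 * M)) as [N HN]. exists N. intros n Hn.
      specialize (HN n Hn). apply Nat.div_le_lower_bound; lia.
    + intros n. destruct (Hiso n) as [Hw [_ [_ Hd]]].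
      apply (iso_bundle Y (X n) F _ _ (rho n) y (w n) (s n) (s n / 3) i).
      * apply (covering_bundle Y (X n) F (rho n)); auto. apply HsX.
      * intros [a1 a2] [b1 b2] Hab. cbn in *.
        destruct HsY as [HsymY _]. destruct HsF as [HsymF _].
        destruct Hab as [[A1 A2]|[A1 A2]].
        -- left. split; [auto|]. subst b2.
           destruct (Hvolt (rho 0 a1) (rho 0 b1)) as [_ [Hinv _]].
           ++ apply (proj1 (Hcovr 0)); auto.
           ++ symmetry. apply Hinv.
        -- right. split; auto.
      * exact Hw.
      * intros a b Ha Hb Heq. 
        assert (D : dist_le (X n) (rho n a) (rho n b) 0).
        { exists 0. split; auto. rewrite Heq. constructor. }
        apply (Hd a b Ha Hb 0) in D. destruct D as [m0 [Hm0 W]].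
        apply (walk0_eq _ _ _ _ W). lia.
      * apply Nat.mul_div_le; lia.
Qed.
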